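(* Let $G$ be a pro-$p$ group. Suppose that for every open subgroup $U$ of $G$ there exists a Frattini-cover $\phi: U\to K$ onto a pro-$p$ group $K$ such that $(K,M,\Phi(M))$ is a hierarchical triple for every maximal subgroup $M$ of $K$. Then $G$ is strongly Frattini-resistant.
   Context: $p$ is a prime; subgroups are closed; $\Phi(H)$ is the Frattini subgroup. A Frattini-cover is an epimorphism $\phi: G\to H$ of pro-$p$ groups with $\ker\phi\le\Phi(G)$. A triple $(G,K,H)$ with $H\le K\le G$ is hierarchical if $x\in G$, $x^p\in H$ imply $x\in K$. $G$ is strongly Frattini-resistant if $(G,H,\Phi(H))$ is hierarchical for every subgroup $H$ of $G$. *)

(* Defs.v *)
From HB Require Import structures.
From mathcomp Require Import all_boot all_order.
From mathcomp Require Import all_classical all_reals all_analysis.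
Set Implicit Arguments. Unset Strict Implicit. Unset Printing Implicit Defensive.
Local Open Scope classical_set_scope.

Section GroupNotions.
Variables (T : topologicalType) (mul : T -> T -> T) (one : T) (inv : T -> T).

Definition gpow (x : T) (n : nat) : T := iter n (mul x) one.

Definition group_axioms :=
  [/\ forall x y z, mul x (mul y z) = mul (mul x y) z,
      forall x, mul one x = x,
      forall x, mul x one = x,
      forall x, mul (inv x) x = one &
      forall x, mul x (inv x) = one].

Definition abs_subgroup (H : set T) :=
  [/\ H one, forall x y, H x -> H y -> H (mul x y) & forall x, H x -> H (inv x)].

(* "subgroup" = closed subgroup (standing convention of the paper) *)
Definition subgroup (H : set T) := abs_subgroup H /\ closed H.

Definition open_subgroup (U : set T) := subgroup U /\ open U.

Definition normal_set (N : set T) :=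
  forall g x, N x -> N (mul (mul (inv g) x) g).

Definition open_normal_subgroup (N : set T) := open_subgroup N /\ normal_set N.

(* the index of N in T is a power of p: a full, irredundant list of left
   coset representatives has length p ^ n *)
Definition ppower_index (p : nat) (N : set T) :=
  exists (n : nat) (s : seq T),
    [/\ size s = (p ^ n)%N,
        forall x, exists i, (i < size s)%N /\ N (mul (inv (nth one s i)) x) &
        forall i j, (i < size s)%N -> (j < size s)%N ->
          N (mul (inv (nth one s i)) (nth one s j)) -> i = j].

Definition maximal_subgroup (H M : set T) :=
  [/\ subgroup M, M `<=` H, M <> H &
      forall L, subgroup L -> M `<=` L -> L `<=` H -> L = M \/ L = H].

(* Frattini subgroup of H: intersection of the maximal subgroups of H
   (equal to H if H has no maximal subgroup) *)
Definition frattini (H : set T) : set T :=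
  [set x | H x /\ forall M, maximal_subgroup H M -> M x].

(* (T, K, H) is hierarchical: x in T, x^p in H  ==>  x in K *)
Definition hierarchical (p : nat) (K H : set T) :=
  forall x, H (gpow x p) -> K x.

End GroupNotions.

Record proPGroup (p : nat) := ProPGroup {
  pg_car :> topologicalType;
  pg_mul : pg_car -> pg_car -> pg_car;
  pg_one : pg_car;
  pg_inv : pg_car -> pg_car;
  pg_group : group_axioms pg_mul pg_one pg_inv;
  pg_mul_cont : continuous (fun xy : pg_car * pg_car => pg_mul xy.1 xy.2);
  pg_inv_cont : continuous pg_inv;
  pg_compact : compact [set: pg_car];
  pg_hausdorff : hausdorff_space pg_car;
  pg_tdisc : totally_disconnected [set: pg_car];
  pg_ppower : forall N, open_normal_subgroup pg_mul pg_one pg_inv N ->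
                        ppower_index pg_mul pg_one pg_inv p N
}.

Section ProP.
Variable p : nat.

Definition pSubgroup (G : proPGroup p) := subgroup (@pg_mul p G) (@pg_one p G) (@pg_inv p G).
Definition pOpenSubgroup (G : proPGroup p) :=
  open_subgroup (@pg_mul p G) (@pg_one p G) (@pg_inv p G).
Definition pMaximal (G : proPGroup p) := maximal_subgroup (@pg_mul p G) (@pg_one p G) (@pg_inv p G).
Definition pFrattini (G : proPGroup p) := frattini (@pg_mul p G) (@pg_one p G) (@pg_inv p G).
Definition pHierarchical (G : proPGroup p) :=
  hierarchical (@pg_mul p G) (@pg_one p G) p.

(* phi : U -> K (U a subgroup of G) is a Frattini-cover: a continuous
   epimorphism of pro-p groups whose kernel lies in Phi(U).
   phi is given as a function on G; only its values on U matter. *)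
Definition frattini_cover (G K : proPGroup p) (U : set G) (phi : G -> K) :=
  [/\ {within U, continuous phi},
      forall x y, U x -> U y -> phi (pg_mul x y) = pg_mul (phi x) (phi y),
      forall k : K, exists2 x, U x & phi x = k &
      forall x, U x -> phi x = @pg_one p K -> pFrattini U x].

Definition strongly_frattini_resistant (G : proPGroup p) :=
  forall H : set G, pSubgroup H -> pHierarchical H (pFrattini H).

End ProP.

(* Main.v *)
Require Import Defs.
From HB Require Import structures.
From mathcomp Require Import all_boot all_order.
From mathcomp Require Import all_classical all_reals all_analysis.
From mathcomp Require Import all_fingroup all_solvable.
From mathcomp Require Import finmap.
From mathcomp Require Import Rstruct.
Set Implicit Arguments. Unset Strict Implicit. Unset Printing Implicit Defensive.
Local Open Scope classical_set_scope.


Section ZD.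
Variable T : topologicalType.
Hypotheses (hT : hausdorff_space T) (cT : compact [set: T]).

Lemma sep_closed (A B : set T) : closed A -> closed B -> A `&` B = set0 ->
  exists U V : set T, [/\ open U, open V, A `<=` U, B `<=` V & U `&` V = set0].
Proof.
have := compact_normal hT cT.
move/(@normal_openP Rdefinitions.R T); exact.
Qed.

Variable x : T.
Let Q := \bigcap_(C in [set C | clopen C /\ C x]) C.

Lemma Q_closed : closed Q.
Proof. by apply: closed_bigI => C [[]]. Qed.

Lemma KL (A1 A2 : set T) : closed A1 -> closed A2 -> A1 `&` A2 = set0 ->
  Q `<=` A1 `|` A2 -> A1 x -> forall z, Q z -> A2 z -> False.
Proof.
move=> c1 c2 d12 QA A1x.
have [U1 [U2 [ o1 o2 s1 s2 d]]] := sep_closed c1 c2 d12.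
have [C [ [oC cC] Cx CU]] : exists C, [/\ clopen C, C x & C `<=` U1 `|` U2].
  apply: contrapT => nC.
  pose Z := ~` (U1 `|` U2).
  have cZ : compact Z.
    apply: (subclosed_compact _ cT) => //; exact: open_closedC (openU o1 o2).
  pose F := filter_from [set C | clopen C /\ C x] (fun C => C `&` Z).
  have FF : Filter F.
    apply: filter_from_filter; first by exists setT; split => //; exact: clopenT.
    move=> C1 C2 [? ?] [? ?]; exists (C1 `&` C2); first by split => //; exact: clopenI.
    by move=> z [[? ?] ?]; split; split.
  have PF : ProperFilter F.
    apply: filter_from_proper => C [clC Cx'].
    apply: contrapT => hne; apply: nC; exists C; split => // z Cz.
    apply: contrapT => nz; apply: hne; by exists z.
  have FZ : F Z by exists setT; [split => //; exact: clopenT | move=> z []].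
  have [z [Zz clz]] := cZ F PF FZ.
  have Qz : Q z.
    move=> C [clC Cx'].
    have : closure (C `&` Z) z.
      move=> B nB; have := clz (C `&` Z) B; apply => //.
      by exists C => //.
    move/(closureS (@subIsetl _ C Z)).
    by have <- : C = closure C by apply/closure_id; case: clC.
  by apply: Zz; case: (QA z Qz) => h; [left; apply: s1|right; apply: s2].
pose D := C `&` U1.
have DE : D = C `&` ~` U2.
  apply/seteqP; split => w [Cw hw]; split => //.
    by move=> U2w; have : (U1 `&` U2) w by []; rewrite d.
  by case: (CU w Cw).
have clD : clopen D.
  split; first exact: openI.
  rewrite DE; apply: closedI => //; exact: open_closedC.
move=> z Qz A2z.
have : D z by apply: Qz; split => //; split => //; exact: s1.
case=> _ U1z.
have : (U1 `&` U2) z by split => //; exact: s2.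
by rewrite d.
Qed.

Lemma Qx : Q x. Proof. by move=> C []. Qed.

Lemma Q_connected : connected Q.
Proof.
move=> B [ b Bb] [ O oO BO] [ F cF BF].
have cQF : closed (Q `&` F) by apply: closedI => //; exact: Q_closed.
have cQO : closed (Q `&` ~` O) by apply: closedI; [exact: Q_closed|exact: open_closedC].
have dj : (Q `&` F) `&` (Q `&` ~` O) = set0.
  apply/seteqP; split => // w [[Qw Fw] [_ nO]].
  have : B w by rewrite BF.
  by rewrite BO => -[].
have dj' : (Q `&` ~` O) `&` (Q `&` F) = set0 by rewrite setIC.
have cov : Q `<=` (Q `&` F) `|` (Q `&` ~` O).
  move=> w Qw; have [Ow|nOw] := pselect (O w); last by right.
  by left; rewrite -BF BO.
have cov' : Q `<=` (Q `&` ~` O) `|` (Q `&` F).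
  by move=> w /cov [] ?; [right|left].
have [Bx|nBx] := pselect (B x).
  have xF : (Q `&` F) x by move: Bx; rewrite BF.
  apply/seteqP; split; first by rewrite BO; exact: subIsetl.
  move=> w Qw; rewrite BO; split => //.
  apply: contrapT => nOw.
  exact: (KL cQF cQO dj cov xF Qw).
have xO : (Q `&` ~` O) x.
  by split; [exact: Qx| move=> Ox; apply: nBx; rewrite BO; split => //; exact: Qx].
exfalso; have : (Q `&` F) b by rewrite -BF.
case=> Qb Fb.
exact: (KL cQO cQF dj' cov' xO Qb (conj Qb Fb)).
Qed.
End ZD.

Lemma zero_dim_of (T : topologicalType) : hausdorff_space T -> compact [set: T] ->
  totally_disconnected [set: T] -> zero_dimensional T.
Proof.
move=> hT cT tdT x y xy; apply: contrapT => nsep.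
have Qy : (\bigcap_(C in [set C | clopen C /\ C x]) C) y.
  move=> C [clC Cx]; apply: contrapT => nCy; apply: nsep; exists C; split => //.
have : connected_component [set: T] x y.
  apply: (connected_component_max (B := \bigcap_(C in [set C | clopen C /\ C x]) C)) => //.
  - exact: Qx.
  - exact: Q_connected.
rewrite tdT // => yx; by move: xy; rewrite yx eqxx.
Qed.



Section Grp.
Variables (p : nat) (G : proPGroup p).
Definition gT : Type := pg_car G.
HB.instance Definition _ := Choice.on gT.
Let ax := pg_group G.
Lemma gA : associative (@pg_mul p G). Proof. by case: ax. Qed.
Lemma g1l : left_id (@pg_one p G) (@pg_mul p G). Proof. by case: ax. Qed.
Lemma g1r : right_id (@pg_one p G) (@pg_mul p G). Proof. by case: ax. Qed.
Lemma gVl : left_inverse (@pg_one p G) (@pg_inv p G) (@pg_mul p G). Proof. by case: ax. Qed.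
Lemma gVr : right_inverse (@pg_one p G) (@pg_inv p G) (@pg_mul p G). Proof. by case: ax. Qed.
HB.instance Definition _ := isGroup.Build gT gA g1l g1r gVl gVr.
HB.instance Definition _ := Topological.on gT.
HB.instance Definition _ := isPointed.Build gT (pg_one G).
Local Open Scope group_scope.

Notation abs A := (abs_subgroup (@pg_mul p G) (@pg_one p G) (@pg_inv p G) A).

Lemma cont_mulL (a : gT) : continuous (fun x : gT => a * x).
Proof.
move=> x.
apply: (@continuous_comp _ _ _ (fun y : gT => (a, y)) (fun xy : gT * gT => pg_mul xy.1 xy.2) x); last exact: pg_mul_cont.
by apply: cvg_pair; [exact: cvg_cst | exact: cvg_id].
Qed.

Lemma cont_mulR (a : gT) : continuous (fun x : gT => x * a).
Proof.
move=> x.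
apply: (@continuous_comp _ _ _ (fun y : gT => (y, a)) (fun xy : gT * gT => pg_mul xy.1 xy.2) x); last exact: pg_mul_cont.
by apply: cvg_pair; [exact: cvg_id | exact: cvg_cst].
Qed.

Lemma cont_inv : continuous (fun x : gT => x^-1).
Proof. exact: pg_inv_cont. Qed.

Lemma nbhs_transl (A : set gT) (v : gT) : nbhs (1 : gT) A -> nbhs v [set y | A (v^-1 * y)].
Proof.
move=> nA; have h := @cont_mulL v^-1 v; rewrite /continuous_at mulVg in h; exact: h.
Qed.

Lemma abs_nbhs_open (A : set gT) : abs A -> nbhs (1 : gT) A -> open A.
Proof.
case=> A1 AM AV nA; rewrite openE => v Av.
apply: (filterS _ (nbhs_transl v nA)) => y /= h.
have -> : y = v * (v^-1 * y) by rewrite mulKVg.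
exact: AM.
Qed.

Lemma abs_open_closed (A : set gT) : abs A -> open A -> closed A.
Proof.
case=> A1 AM AV oA; rewrite -openC openE => y nAy.
have nA : nbhs (1 : gT) A by apply: open_nbhs_nbhs; split.
apply: (filterS _ (nbhs_transl y nA)) => x /= h Ax; apply: nAy.
have -> : y = x * (y^-1 * x)^-1 by rewrite invgM invgK mulKVg.
by apply: AM => //; exact: AV.
Qed.

End Grp.

Section H.
Variables (p : nat) (G : proPGroup p).
Local Open Scope group_scope.
Notation gT := (gT G).
Lemma S_nbhs (C : set gT) : clopen C -> nbhs (1 : gT) [set b | forall a, C a -> C (a * b)].
Proof.
case=> oC cC.
have cpC : compact C by apply: (subclosed_compact (B := setT) cC) => //; exact: (@pg_compact p G).
have := (compact_near_coveringP C).1 cpC gT (nbhs (1:gT)) (fun b a => C (a * b)) _.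
apply => //.
move=> c Cc.
have h := @pg_mul_cont p G (c, (1 : gT)).
rewrite /continuous_at /= in h.
have nC : nbhs (pg_mul c (1:gT)) C by apply: open_nbhs_nbhs; split => //; have -> : pg_mul c (1:gT) = c := mulg1 c.
exact: (h _ nC).
Qed.

Notation abs A := (abs_subgroup (@pg_mul p G) (@pg_one p G) (@pg_inv p G) A).

Definition wprod (l : seq gT) : gT := foldr (fun a b => a * b) 1 l.

Lemma wprod_cat l1 l2 : wprod (l1 ++ l2) = wprod l1 * wprod l2.
Proof. by elim: l1 => [|a l IH] /=; rewrite ?mul1g // IH mulgA. Qed.

Lemma open_sub_in_clopen (C : set gT) : clopen C -> C 1 ->
  exists V : set gT, [/\ abs V, open V & V `<=` C].
Proof.
move=> clC C1.
pose S := [set b : gT | forall a, C a -> C (a * b)].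
have nS : nbhs (1 : gT) S by exact: S_nbhs.
pose S' := [set b : gT | S b /\ S b^-1].
have nS' : nbhs (1 : gT) S'.
  apply: filterI => //.
  have h := @cont_inv p G 1; rewrite /continuous_at in h.
  have e : (1 : gT)^-1 = 1 by rewrite invg1.
  rewrite e in h; exact: (h _ nS).
pose V := [set g : gT | exists l : seq gT, (forall b, b \in l -> S' b) /\ g = wprod l].
have VC : V `<=` C.
  move=> g [l [lS ->]].
  suff : forall a, C a -> C (a * wprod l) by move/(_ 1 C1); rewrite mul1g.
  elim: l lS => [|b l IH] lS a Ca /=; first by rewrite mulg1.
  rewrite mulgA; apply: IH; first by move=> c cl; apply: lS; rewrite in_cons cl orbT.
  by have [Sb _] := lS b (mem_head _ _); exact: Sb.
have V1 : V 1 by exists [::]; split.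
have VM : forall x y, V x -> V y -> V (x * y).
  move=> x y [l1 [h1 ->]] [l2 [h2 ->]]; exists (l1 ++ l2); split; last by rewrite wprod_cat.
  by move=> b; rewrite mem_cat => /orP [] ?; [exact: h1|exact: h2].
have VV : forall x, V x -> V x^-1.
  move=> x [l [lS ->]]; elim: l lS => [|b l IH] lS /=; first by rewrite invg1.
  rewrite invgM; apply: (VM).
    by apply: IH => c cl; apply: lS; rewrite in_cons cl orbT.
  exists [:: b^-1]; split; last by rewrite /wprod /= mulg1.
  move=> c; rewrite inE => /eqP ->; have [Sb Sb'] := lS b (mem_head _ _).
  by split => //; rewrite invgK.
have aV : abs V by split.
exists V; split => //.
apply: abs_nbhs_open => //.
apply: (filterS _ nS') => b Sb; exists [:: b]; split; last by rewrite /wprod /= mulg1.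
by move=> c; rewrite inE => /eqP ->.
Qed.


Notation nset N := (normal_set (@pg_mul p G) (@pg_inv p G) N).

Lemma cont_conj (g : gT) : continuous (fun y : gT => y ^ g).
Proof.
move=> y.
apply: (@continuous_comp _ _ _ (fun y : gT => y * g) (fun z : gT => g^-1 * z) y).
  exact: cont_mulR.
exact: cont_mulL.
Qed.

Lemma normal_core (V : set gT) : abs V -> open V ->
  exists N : set gT, [/\ abs N, open N, nset N & N `<=` V].
Proof.
move=> [V1 VM VV] oV.
have cG : compact [set: gT] by exact: (@pg_compact p G).
rewrite compact_cover in cG.
have [D' _ cov] := cG gT setT (fun g => [set y : gT | V (g^-1 * y)])
  (fun g _ => open_comp (fun y _ => @cont_mulL p G g^-1 y) oV)
  (fun y _ => ex_intro2 _ _ y I (eq_ind _ V V1 _ (esym (mulVg y)))).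
pose N := \bigcap_(g in [set` D']) [set y : gT | V (y ^ g)].
have aN : abs N.
  split.
  - by move=> g _ /=; rewrite conj1g.
  - by move=> x y Nx Ny g Dg /=; rewrite conjMg; apply: (VM); [exact: Nx|exact: Ny].
  - by move=> x Nx g Dg /=; rewrite conjVg; apply: VV; exact: Nx.
exists N; split => //.
- apply: abs_nbhs_open => //; apply: filter_bigI => g _.
  have h := @cont_conj g 1; rewrite /continuous_at conj1g in h.
  apply: h; apply: open_nbhs_nbhs; split => //.
- move=> h x Nx g Dg /=.
  have [g' Dg' /= Vg'] := cov ((h : gT) * g) I.
  set v := g'^-1 * ((h : gT) * g) in Vg'.
  have e : (h : gT) * g = g' * v by rewrite /v mulKVg.
  have -> : (((h : gT)^-1 * x) * h) ^ g = ((x : gT) ^ g') ^ v.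
    by rewrite -conjgM -e conjgM /conjg !mulgA.
  rewrite /conjg; apply: (VM); first exact: (VV).
  by apply: (VM) => //; exact: Nx.
- have [g Dg /= Vg] := cov 1 I.
  rewrite mulg1 in Vg.
  move=> x Nx; have := Nx g Dg => /= Vx.
  have -> : x = g * (x ^ g) * g^-1 by rewrite /conjg !mulgA mulgV mul1g mulgK.
  apply: (VM); last exact: Vg.
  apply: (VM) => //.
  by rewrite -(invgK g); exact: (VV).
Qed.


Lemma nbhs_normal (W : set gT) : open W -> W 1 ->
  exists N : set gT, [/\ abs N, open N, nset N & N `<=` W].
Proof.
move=> oW W1.
have zd : zero_dimensional gT.
  apply: zero_dim_of; [exact: (@pg_hausdorff p G)|exact: (@pg_compact p G)|exact: (@pg_tdisc p G)].
have := @zero_dimensional_cvg gT (1 : gT) (@pg_hausdorff p G) zd (@pg_compact p G).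
move=> /(_ W) []; first by apply: open_nbhs_nbhs; split.
move=> D [D1 clD] DW.
have [V [aV oV VD]] := open_sub_in_clopen clD D1.
have [N [aN oN nN NV]] := normal_core aV oV.
exists N; split => //; move=> y /NV /VD; exact: DW.
Qed.

Lemma separate (H : set gT) (x : gT) (O : set gT) : closed H -> ~ H x -> open O -> O 1 ->
  exists N : set gT, [/\ abs N, open N, nset N, N `<=` O &
     forall h n, H h -> N n -> h * n <> x].
Proof.
move=> cH nHx oO O1.
pose W := O `&` ~` [set n : gT | H (x * n^-1)].
have oW : open W.
  apply: openI => //; apply: closed_openC.
  apply: (@preimage_closed _ _ (fun n : gT => x * n^-1)) => // n _.
  apply: (@continuous_comp _ _ _ (fun y : gT => y^-1) (fun z : gT => x * z) n).
    exact: cont_inv.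
  exact: cont_mulL.
have W1 : W 1 by split => //=; rewrite invg1 mulg1.
have [N [aN oN nN NW]] := nbhs_normal oW W1.
exists N; split => //; first by move=> y /NW [].
move=> h n Hh Nn e; have [_] := NW n Nn; apply => /=.
by rewrite -e mulgK.
Qed.

End H.


Section Quot.
Variables (p : nat) (G : proPGroup p).
Local Open Scope group_scope.
Notation gT := (gT G).
Notation abs A := (abs_subgroup (@pg_mul p G) (@pg_one p G) (@pg_inv p G) A).
Notation nset N := (normal_set (@pg_mul p G) (@pg_inv p G) N).
Variables (N : set gT) (n : nat) (s : seq gT).
Hypotheses (pp : prime p) (aN : abs N) (oN : open N) (nN : nset N) (hs : size s = (p ^ n)%N).
Hypothesis hcov : forall x : gT, exists i, (i < size s)%N /\ N ((nth 1 s i)^-1 * x).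
Hypothesis hirr : forall i j, (i < size s)%N -> (j < size s)%N ->
  N ((nth 1 s i)^-1 * nth 1 s j) -> i = j.

Let N1 : N 1. Proof. by case: aN. Qed.
Let NM x y : N x -> N y -> N (x * y). Proof. by case: aN => _ h _; exact: h. Qed.
Let NV x : N x -> N x^-1. Proof. by case: aN => _ _ h; exact: h. Qed.
Let NJ g x : N x -> N (g^-1 * x * g). Proof. exact: nN. Qed.

Definition qT : Type := 'I_(size s).
HB.instance Definition _ := Finite.on qT.
Definition rep (i : qT) : gT := nth 1 s i.

Lemma ex_proj (x : gT) : exists i : qT, N ((rep i)^-1 * x).
Proof. by have [i [lt Ni]] := hcov x; exists (Ordinal lt). Qed.

Definition proj (x : gT) : qT := projT1 (cid (ex_proj x)).
Lemma projP x : N ((rep (proj x))^-1 * x).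
Proof. exact: (projT2 (cid (ex_proj x))). Qed.

Lemma proj_eq x y : proj x = proj y <-> N (x^-1 * y).
Proof.
split.
  move=> e; have h1 := projP x; have h2 := projP y; rewrite -e in h2.
  have -> : x^-1 * y = ((rep (proj x))^-1 * x)^-1 * ((rep (proj x))^-1 * y).
    by rewrite invgM invgK mulgA mulgK.
  by apply: NM => //; exact: NV.
move=> Nxy; apply: val_inj; apply: hirr; [exact: ltn_ord|exact: ltn_ord|].
have -> : (nth 1 s (proj x))^-1 * nth 1 s (proj y) =
   ((rep (proj x))^-1 * x) * (x^-1 * y) * ((rep (proj y))^-1 * y)^-1.
  by rewrite /rep invgM invgK !mulgA !mulgK.
by apply: NM; [apply: NM => //; exact: projP | apply: NV; exact: projP].
Qed.

Lemma proj_rep i : proj (rep i) = i.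
Proof.
apply: val_inj; apply: hirr; [exact: ltn_ord|exact: ltn_ord|].
exact: projP.
Qed.

Lemma projM0 x y : proj (x * y) = proj (rep (proj x) * rep (proj y)).
Proof.
apply/proj_eq.
have -> : (x * y)^-1 * (rep (proj x) * rep (proj y)) =
  (y^-1 * (x^-1 * rep (proj x)) * y) * (y^-1 * rep (proj y)).
  by rewrite invgM !mulgA mulgK.
apply: NM; first apply: NJ.
  have -> : x^-1 * rep (proj x) = ((rep (proj x))^-1 * x)^-1 by rewrite invgM invgK.
  by apply: NV; exact: projP.
have -> : y^-1 * rep (proj y) = ((rep (proj y))^-1 * y)^-1 by rewrite invgM invgK.
by apply: NV; exact: projP.
Qed.

Definition qmul (i j : qT) : qT := proj (rep i * rep j).
Definition qone : qT := proj 1.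
Definition qinv (i : qT) : qT := proj (rep i)^-1.

Lemma qE x y : qmul (proj x) (proj y) = proj (x * y).
Proof. by rewrite projM0. Qed.

Lemma qmulA : associative qmul.
Proof.
move=> i j k; rewrite -[i]proj_rep -[j]proj_rep -[k]proj_rep.
by rewrite !qE mulgA.
Qed.

Lemma qmul1 : left_id qone qmul.
Proof. by move=> i; rewrite -[i]proj_rep /qone qE mul1g. Qed.

Lemma qmulV : left_inverse qone qinv qmul.
Proof. by move=> i; rewrite /qinv; have := qE (rep i)^-1 (rep i); rewrite proj_rep mulVg. Qed.

HB.instance Definition _ := Finite_isGroup.Build qT qmulA qmul1 qmulV.

Lemma projM x y : proj (x * y) = (proj x * proj y)%g.
Proof. by rewrite -qE. Qed.

Lemma proj1 : proj 1 = 1%g.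
Proof. by []. Qed.

Lemma projV x : proj x^-1 = (proj x)^-1%g.
Proof.
apply: (mulgI (proj x)); rewrite -projM mulgV mulgV; exact: proj1.
Qed.

Lemma proj_surj (i : qT) : exists x, proj x = i.
Proof. by exists (rep i); exact: proj_rep. Qed.

Lemma pgroupQ : p.-group [set: qT]%SET.
Proof.
rewrite /pgroup cardsT card_ord hs pnatX pnat_id //; exact: orbT.
Qed.

Notation subg L := (subgroup (@pg_mul p G) (@pg_one p G) (@pg_inv p G) L).

Definition pre (B : {set qT}) : set gT := [set g | proj g \in B].
Definition img (A : set gT) : {set qT} := [set i | `[< exists2 a, A a & proj a = i >]]%SET.

Lemma mem_img (A : set gT) a : A a -> proj a \in img A.
Proof. by move=> Aa; rewrite inE; apply/asboolP; exists a. Qed.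

Lemma in_img (A : set gT) i : i \in img A -> exists2 a, A a & proj a = i.
Proof. by rewrite inE => /asboolP. Qed.

Lemma pre_abs (B : {group qT}) : abs (pre B).
Proof.
split.
- by change (proj (1 : gT) \in B); rewrite proj1 group1.
- by move=> x y Bx By; change (proj ((x : gT) * (y : gT)) \in B); rewrite projM groupM.
- by move=> x Bx; change (proj ((x : gT)^-1) \in B); rewrite projV groupV.
Qed.

Lemma nbhsN : nbhs (1 : gT) N.
Proof. by apply: open_nbhs_nbhs; split. Qed.

Lemma pre_open (B : {set qT}) : open (pre B).
Proof.
rewrite openE => g Bg.
apply: (filterS _ (nbhs_transl g nbhsN)) => y /= Ny.
by rewrite /pre /=; have <- : proj g = proj y by apply/proj_eq.
Qed.

Lemma pre_N (B : {group qT}) : N `<=` pre B.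
Proof.
move=> m Nm; rewrite /pre /=.
have -> : proj m = proj 1 by apply/proj_eq; rewrite mulg1; exact: NV.
by rewrite proj1 group1.
Qed.

Lemma img_group (A : set gT) : abs A -> group_set (img A).
Proof.
case=> A1 AM AV; apply/group_setP; split; first by rewrite -proj1; exact: mem_img.
move=> i j /in_img [a Aa <-] /in_img [b Bb <-]; rewrite -projM; apply: mem_img.
exact: AM.
Qed.

Lemma pre_img (A : set gT) : abs A -> N `<=` A -> pre (img A) = A.
Proof.
case=> A1 AM AV NA; apply/seteqP; split => g; last exact: mem_img.
move=> /in_img [a Aa /proj_eq Nag].
have -> : g = a * (a^-1 * g) by rewrite mulKVg.
by apply: AM => //; exact: NA.
Qed.

Lemma img_pre (B : {set qT}) : img (pre B) = B.
Proof.
apply/setP => i; apply/idP/idP; first by move=> /in_img [a Ba <-].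
by move=> Bi; rewrite -(proj_rep i); apply: mem_img; rewrite /pre /= proj_rep.
Qed.

Lemma img_sub (A B : set gT) : A `<=` B -> img A \subset img B.
Proof. by move=> AB; apply/fintype.subsetP => i /in_img [a Aa <-]; apply: mem_img; exact: AB. Qed.

Lemma pre_sub (A B : {set qT}) : A \subset B -> pre A `<=` pre B.
Proof. by move=> /fintype.subsetP AB g; rewrite /pre /= => /AB. Qed.

Lemma pre_subg (B : {group qT}) : subg (pre B).
Proof. split; [exact: pre_abs | apply: abs_open_closed; [exact: pre_abs|exact: pre_open]]. Qed.


Lemma quot_normal (V R : set gT) : abs V -> abs R -> N `<=` R -> R `<=` V ->
  (exists2 y, V y & ~ R y) ->
  (forall L, subg L -> R `<=` L -> L `<=` V -> L = R \/ L = V) ->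
  forall v r, V v -> R r -> R (v^-1 * r * v).
Proof.
move=> aV aR NR RV [y Vy nRy] maxR.
have NsV : N `<=` V by move=> m /NR /RV.
pose VB := Group (img_group aV); pose RB := Group (img_group aR).
have mx : maximal RB VB.
  apply/maxgroupP; split.
    rewrite properE; apply/andP; split; first exact: img_sub.
    apply/negP => /fintype.subsetP sub; apply: nRy.
    rewrite -(pre_img aR NR); exact: (sub _ (mem_img Vy)).
  move=> LB /andP [sLV nsLV] sRL.
  pose L := pre LB.
  have RL : R `<=` L.
    move=> r Rr; rewrite /L /pre /=; exact: (fintype.subsetP sRL _ (mem_img Rr)).
  have LV : L `<=` V.
    move=> g Lg; rewrite -(pre_img aV NsV); exact: (pre_sub sLV Lg).
  case: (maxR L (pre_subg LB) RL LV) => e.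
    by rewrite /= -(img_pre LB) -/L e.
  by case/negP: nsLV; rewrite /= -(img_pre LB) -/L e.
have nRV := p_maximal_normal (pgroupS (finset.subsetT VB) pgroupQ) mx.
move=> v r Vv Rr.
rewrite -(pre_img aR NR) /pre /= !projM projV.
have -> : ((proj v)^-1 * proj r * proj v)%g = (proj r ^ proj v)%g by rewrite /conjg mulgA.
rewrite memJ_norm; first exact: mem_img.
exact: (fintype.subsetP (normal_norm nRV) _ (mem_img Vv)).
Qed.


Lemma quot_main (H : set gT) (x : gT) : abs H ->
  (forall h m, H h -> N m -> h * m <> x) ->
  exists U M : set gT, [/\ abs U, open U, abs M, open M &
    [/\ H `<=` M, M `<=` U, U x, ~ M x &
       forall L, subg L -> M `<=` L -> L `<=` U -> L = M \/ L = U]].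
Proof.
move=> aH nx.
pose HB := Group (img_group aH); pose xb := proj x.
have xnH : xb \notin HB.
  apply/negP => /in_img [h Hh /proj_eq Nhx]; apply: (nx h (h^-1 * x)) => //.
  by rewrite mulKVg.
pose UB := (<<xb |: (HB : {set qT})>>)%G.
have HU : HB \subset UB := fintype.subset_trans (finset.subsetUr _ _) (subset_gen _).
have xU : xb \in UB := mem_gen (finset.setU11 xb HB).
have HpU : HB \proper UB.
  rewrite properE HU /=; apply/negP => /fintype.subsetP sub.
  by move: xnH; rewrite (sub _ xU).
have [MB maxM HM] := @maxgroup_exists _ (fun L : {group qT} => L \proper UB) HB HpU.
have [MpU maxM'] := maxgroupP maxM.
have xnM : xb \notin MB.
  apply/negP => xM; move/andP: MpU => [_]; case/negP.
  by rewrite gen_subG finset.subUset finset.sub1set xM (fintype.subset_trans HM).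
pose U := pre UB; pose M := pre MB.
have aM : abs M := pre_abs MB.
have NM' : N `<=` M := pre_N MB.
exists U, M; split; [exact: pre_abs|exact: pre_open|exact: aM|exact: pre_open|split].
- move=> h Hh; rewrite /M /pre /=; exact: (fintype.subsetP HM _ (mem_img Hh)).
- exact: pre_sub (proper_sub MpU).
- by rewrite /U /pre /=.
- by rewrite /M /pre /=; apply/negP.
move=> L [aL cL] ML LU.
have NL : N `<=` L by move=> m /NM' /ML.
pose LB := Group (img_group aL).
have MLB : MB \subset LB.
  apply/fintype.subsetP => i Mi; rewrite -(proj_rep i); apply: mem_img; apply: ML.
  by rewrite /M /pre /= proj_rep.
have LUB : LB \subset UB by rewrite -(img_pre UB); exact: img_sub.
case: (boolP (UB \subset LB)) => hUL.
  right; rewrite -(pre_img aL NL); rewrite /U; congr pre.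
  by apply/eqP; rewrite finset.eqEsubset LUB hUL.
left; rewrite -(pre_img aL NL) /M; congr pre.
have LpU : LB \proper UB by rewrite properE LUB hUL.
exact: (maxM' LB LpU MLB).
Qed.

End Quot.


Lemma closed_preim_within (T S : topologicalType) (A : set T) (f : T -> S) (B : set S) :
  closed A -> {within A, continuous f} -> closed B -> closed (A `&` f @^-1` B).
Proof.
move=> cA cf cB z clz.
have Az : A z by apply: cA => W nW; have [y [[Ay _] Wy]] := clz W nW; exists y.
split => //; apply: cB => W nW.
have h := cf z; rewrite /continuous_at in h.
have := h W nW.
move=> nz.
have nz' : within A (nbhs z) (f @^-1` W) by rewrite nbhs_subspace_in //.
have [y [[Ay By] hy]] := clz _ nz'.
by exists (f y); split => //; exact: hy.
Qed.

Section ProP.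
Variables (p : nat) (G : proPGroup p).
Hypothesis pp : prime p.
Local Open Scope group_scope.
Notation gT := (gT G).
Notation abs A := (abs_subgroup (@pg_mul p G) (@pg_one p G) (@pg_inv p G) A).
Notation nset N := (normal_set (@pg_mul p G) (@pg_inv p G) N).
Notation subg L := (subgroup (@pg_mul p G) (@pg_one p G) (@pg_inv p G) L).
Notation maxsub H M := (maximal_subgroup (@pg_mul p G) (@pg_one p G) (@pg_inv p G) H M).
Notation phi H := (frattini (@pg_mul p G) (@pg_one p G) (@pg_inv p G) H).

Lemma proper_witness (R V : set gT) : R `<=` V -> R <> V -> exists2 y, V y & ~ R y.
Proof.
move=> RV nRV; apply: contrapT => nex; apply: nRV; apply/seteqP; split => // y Vy.
by apply: contrapT => nRy; apply: nex; exists y.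
Qed.

Lemma maxnormal (V R : set gT) : abs V -> open V -> maxsub V R ->
  open R /\ forall v r, V v -> R r -> R (v^-1 * r * v).
Proof.
move=> aV oV [[aR cR] RV nRV maxR].
have [y Vy nRy] := proper_witness RV nRV.
have V1 : V 1 by case: aV.
have [N [aN oN nN NV sepN]] := separate cR nRy oV V1.
have [N1 NM NV'] := aN.
have [R1 RM RV'] := aR.
pose RN := [set g : gT | exists2 r, R r & N (r^-1 * g)].
have aRN : abs RN.
  split.
  - by exists 1 => //; rewrite invg1 mul1g.
  - move=> g1 g2 [r1 Rr1 N1'] [r2 Rr2 N2']; exists (r1 * r2); first exact: RM.
    have -> : ((r1 : gT) * r2)^-1 * ((g1 : gT) * g2) = (r2^-1 * (r1^-1 * g1) * r2) * (r2^-1 * g2).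
      by rewrite invgM !mulgA mulgK.
    by apply: NM => //; exact: nN.
  - move=> g [r Rr Nr]; exists (r : gT)^-1; first exact: RV'.
    have -> : ((r : gT)^-1)^-1 * (g : gT)^-1 = ((r^-1)^-1 * (r^-1 * g) * r^-1)^-1.
      by rewrite !invgK !invgM !invgK !mulgA mulgK.
    by apply: NV'; apply: nN.
have oRN : open RN.
  rewrite openE => g [r Rr Nrg].
  have nN1 : nbhs (1 : gT) N by apply: open_nbhs_nbhs; split.
  apply: (filterS _ (nbhs_transl g nN1)) => z /= Nz.
  exists r => //.
  have -> : (r : gT)^-1 * z = (r^-1 * g) * (g^-1 * z) by rewrite !mulgA mulgK.
  exact: NM.
have RRN : R `<=` RN by move=> r Rr; exists r => //; rewrite mulVg.
have RNV : RN `<=` V.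
  move=> g [r Rr Nrg]; have -> : g = (r : gT) * (r^-1 * g) by rewrite mulKVg.
  by case: aV => _ VM _; apply: VM; [exact: RV|exact: NV].
have [eR|eV] := maxR RN (conj aRN (abs_open_closed aRN oRN)) RRN RNV.
- have NR : N `<=` R.
    by move=> m Nm; rewrite -eR; exists 1 => //; rewrite invg1 mul1g.
  split; first by rewrite -eR.
  have [k [s' [hs hcov hirr]]] := @pg_ppower p G N (conj (conj (conj aN (abs_open_closed aN oN)) oN) nN).
  exact: (quot_normal pp aN oN nN hs hcov hirr aV aR NR RV (ex_intro2 _ _ y Vy nRy) maxR).
- exfalso; have : RN y by rewrite eV.
  case=> r Rr Nry; apply: (sepN r (r^-1 * y)) => //.
  by rewrite mulKVg.
Qed.

Lemma frat_mono (H V : set gT) : subg H -> abs V -> open V -> H `<=` V ->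
  phi H `<=` phi V.
Proof.
move=> [aH cH] aV oV HV g [Hg Fg]; split; first exact: HV.
move=> R mR.
have [oR nR] := maxnormal aV oV mR.
have [[aR cR] RV nRV maxR] := mR.
have [R1 RM RV'] := aR.
have [H1 HM HV'] := aH.
have [V1 VM VV'] := aV.
have [sHR|nsHR] := pselect (H `<=` R); first exact: sHR.
have [h0 Hh0 nRh0] : exists2 h, H h & ~ R h.
  by apply: contrapT => nex; apply: nsHR => h Hh; apply: contrapT => nRh; apply: nex; exists h.
suff mHR : maxsub H (H `&` R) by have [] := Fg _ mHR.
have aHR : abs (H `&` R).
  split; first by split.
  - by move=> a b [Ha Ra] [Hb Rb]; split; [exact: HM|exact: RM].
  - by move=> a [Ha Ra]; split; [exact: HV'|exact: RV'].
split; [by split => //; exact: closedI | exact: subIsetl |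
  by move=> e; apply: nRh0; have [] : (H `&` R) h0 by rewrite e | ].
move=> L [aL cL] HRL LH.
have [L1 LM LV'] := aL.
have [sLR|] := pselect (L `<=` R).
  left; apply/seteqP; split => // l Ll; split; [exact: LH|exact: sLR].
move=> nsLR.
have [l Ll nRl] : exists2 l, L l & ~ R l.
  by apply: contrapT => nex; apply: nsLR => z Lz; apply: contrapT => nRz; apply: nex; exists z.
pose LR := [set g : gT | exists2 l : gT, L l & R (l^-1 * g)].
have LVs : L `<=` V by move=> z /LH /HV.
have aLR : abs LR.
  split.
  - by exists 1 => //; rewrite invg1 mul1g.
  - move=> g1 g2 [l1 Ll1 R1'] [l2 Ll2 R2']; exists (l1 * l2); first exact: LM.
    have -> : ((l1 : gT) * l2)^-1 * ((g1 : gT) * g2) = (l2^-1 * (l1^-1 * g1) * l2) * (l2^-1 * g2).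
      by rewrite invgM !mulgA mulgK.
    by apply: RM => //; apply: nR => //; exact: LVs.
  - move=> g' [l' Ll' Rl']; exists (l' : gT)^-1; first exact: LV'.
    have -> : ((l' : gT)^-1)^-1 * (g' : gT)^-1 = ((l'^-1)^-1 * (l'^-1 * g') * l'^-1)^-1.
      by rewrite !invgK !invgM !invgK !mulgA mulgK.
    apply: RV'; apply: nR => //; apply: VV'; exact: LVs.
have oLR : open LR.
  rewrite openE => g' [l' Ll' Rg'].
  have nR1 : nbhs (1 : gT) R by apply: open_nbhs_nbhs; split.
  apply: (filterS _ (nbhs_transl g' nR1)) => z /= Rz.
  exists l' => //.
  have -> : (l' : gT)^-1 * z = (l'^-1 * g') * (g'^-1 * z) by rewrite !mulgA mulgK.
  exact: RM.
have RLR : R `<=` LR by move=> r Rr; exists 1 => //; rewrite invg1 mul1g.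
have LRV : LR `<=` V.
  move=> g' [l' Ll' Rg']; have -> : g' = (l' : gT) * (l'^-1 * g') by rewrite mulKVg.
  by apply: VM; [exact: LVs|exact: RV].
have [eR|eV] := maxR LR (conj aLR (abs_open_closed aLR oLR)) RLR LRV.
  by exfalso; apply: nRl; rewrite -eR; exists l => //; rewrite mulVg.
right; apply/seteqP; split => // h Hh.
have : LR h by rewrite eV; exact: HV.
case=> l' Ll' Rlh.
have HRlh : (H `&` R) ((l' : gT)^-1 * h) by split => //; apply: HM => //; apply: HV'; exact: LH.
have -> : h = (l' : gT) * (l'^-1 * h) by rewrite mulKVg.
by apply: LM => //; exact: HRL.
Qed.
End ProP.

Lemma gpowE (p : nat) (G : proPGroup p) (x : gT G) n :
  gpow (@pg_mul p G) (@pg_one p G) x n = (x ^+ n)%g.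
Proof. by rewrite /gpow; elim: n => //= n ->; rewrite expgS. Qed.

Section Cover.
Variables (p : nat) (G K : proPGroup p).
Local Open Scope group_scope.
Notation absG A := (abs_subgroup (@pg_mul p G) (@pg_one p G) (@pg_inv p G) A).
Notation absK A := (abs_subgroup (@pg_mul p K) (@pg_one p K) (@pg_inv p K) A).
Notation subgG L := (subgroup (@pg_mul p G) (@pg_one p G) (@pg_inv p G) L).
Notation subgK L := (subgroup (@pg_mul p K) (@pg_one p K) (@pg_inv p K) L).
Notation maxsubG H M := (maximal_subgroup (@pg_mul p G) (@pg_one p G) (@pg_inv p G) H M).
Notation maxsubK H M := (maximal_subgroup (@pg_mul p K) (@pg_one p K) (@pg_inv p K) H M).
Notation phiG H := (frattini (@pg_mul p G) (@pg_one p G) (@pg_inv p G) H).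
Notation phiK H := (frattini (@pg_mul p K) (@pg_one p K) (@pg_inv p K) H).

Variables (U M : set (gT G)) (f : gT G -> gT K).
Hypotheses (aU : absG U) (cU : closed U) (mM : maxsubG U M).
Hypothesis fc : frattini_cover U f.

Let fcont : {within U, continuous f}. Proof. by case: fc. Qed.
Let fM : forall x y, U x -> U y -> f (x * y) = f x * f y. Proof. by case: fc. Qed.
Let fsurj : forall k, exists2 x, U x & f x = k. Proof. by case: fc. Qed.
Let fker : forall x, U x -> f x = 1 -> phiG U x. Proof. by case: fc. Qed.
Let U1 : U 1. Proof. by case: aU. Qed.
Let UM x y : U x -> U y -> U (x * y). Proof. by case: aU => _ h _; exact: h. Qed.
Let UV x : U x -> U x^-1. Proof. by case: aU => _ _ h; exact: h. Qed.

Lemma f1 : f 1 = 1.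
Proof. by apply: (mulgI (f 1)); rewrite -fM // !mulg1. Qed.

Lemma fV x : U x -> f x^-1 = (f x)^-1.
Proof. by move=> Ux; apply: (mulgI (f x)); rewrite -fM ?mulgV ?f1 //; exact: UV. Qed.

Lemma fX x n : U x -> f (x ^+ n) = (f x) ^+ n.
Proof.
move=> Ux; elim: n => [|n IH]; first by rewrite !expg0 f1.
have UXn : U (x ^+ n) by elim: (n) => [|m IHm]; [rewrite expg0|rewrite expgS; exact: UM].
by rewrite !expgS fM // IH.
Qed.

Lemma ker_sub (H : set (gT G)) : maxsubG U H -> forall u, U u -> f u = 1 -> H u.
Proof. by move=> mH u Uu fu; have [_] := fker Uu fu; apply. Qed.

Lemma f_eq (H : set (gT G)) : maxsubG U H -> forall u v, H u -> U v -> f u = f v -> H v.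
Proof.
move=> mH u v Hu Uv e.
have [[[H1 HM HV] _] HU _ _] := mH.
have Uu : U u by exact: HU.
have -> : v = u * (u^-1 * v) by rewrite mulKVg.
apply: HM => //; apply: (ker_sub mH); first by apply: UM => //; exact: UV.
by rewrite fM ?fV ?e ?mulVg //; exact: UV.
Qed.

Lemma img_subg (A : set (gT G)) : subgG A -> A `<=` U -> subgK (f @` A).
Proof.
move=> [[A1 AM AV] cA] AU; split; first split.
- by exists 1 => //; exact: f1.
- move=> _ _ [a Aa <-] [b Ab <-]; exists (a * b); first exact: AM.
  by rewrite fM //; exact: AU.
- move=> _ [a Aa <-]; exists a^-1; first exact: AV.
  by rewrite fV //; exact: AU.
apply: compact_closed; first exact: (@pg_hausdorff p K).
apply: continuous_compact; first exact: (continuous_subspaceW AU fcont).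
apply: (subclosed_compact (B := setT) cA) => //; exact: (@pg_compact p G).
Qed.

Lemma fpre_subg (A : set (gT G)) (B : set (gT K)) : subgG A -> A `<=` U -> subgK B ->
  subgG (A `&` f @^-1` B).
Proof.
move=> [[A1 AM AV] cA] AU [[B1 BM BV] cB]; split; first split.
- by split => //=; rewrite f1.
- move=> a b [Aa Ba] [Ab Bb]; split; first exact: AM.
  by rewrite /= fM; [exact: BM|exact: AU|exact: AU].
- move=> a [Aa Ba]; split; first exact: AV.
  by rewrite /= fV; [exact: BV|exact: AU].
apply: closed_preim_within => //; exact: (continuous_subspaceW AU fcont).
Qed.

Lemma cover_part :
  (forall Mk : set (gT K), maxsubK [set: gT K] Mk ->
     hierarchical (@pg_mul p K) (@pg_one p K) p Mk (phiK Mk)) ->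
  forall x, U x -> phiG M (x ^+ p) -> M x.
Proof.
move=> hK x Ux Fx.
have [[aM cM] MU nMU maxM] := mM.
pose Mk := f @` M.
have sMk : subgK Mk := img_subg (conj aM cM) MU.
have mMk : maxsubK [set: gT K] Mk.
  split => //.
  - move=> e; have [u Uu nMu] := proper_witness MU nMU.
    have : Mk (f u) by rewrite e.
    by case=> m Mm fm; apply: nMu; exact: (f_eq mM Mm Uu fm).
  - move=> L sL MkL _.
    pose L' := U `&` f @^-1` L.
    have sL' : subgG L' := fpre_subg (conj aU cU) (fun _ h => h) sL.
    have ML' : M `<=` L' by move=> m Mm; split; [exact: MU|apply: MkL; exists m].
    case: (maxM L' sL' ML' (@subIsetl _ _ _)) => e.
      left; apply/seteqP; split => // k Lk.
      have [u Uu fu] := fsurj k.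
      have : L' u by split => //=; rewrite fu.
      by rewrite e => Mu; exists u.
    right; apply/seteqP; split => // k _.
    have [u Uu fu] := fsurj k.
    have : L' u by rewrite e.
    by case=> _ /=; rewrite fu.
have [Mxp Fx'] := Fx.
have Fk : phiK Mk (f (x ^+ p)).
  split; first by exists (x ^+ p).
  move=> R mR; have [[aR cR] RMk nRMk maxR] := mR.
  pose R' := M `&` f @^-1` R.
  suff mR' : maxsubG M R' by have [] := Fx' R' mR'.
  have [R1 RM RV] := aR.
  have [M1 MM MV] := aM.
  split.
  - exact: fpre_subg (conj aM cM) MU (conj aR cR).
  - exact: subIsetl.
  - move=> e; have [k Mkk nRk] := proper_witness RMk nRMk.
    case: Mkk => m Mm fm; apply: nRk; rewrite -fm.
    by have [] : R' m by rewrite e.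
  - move=> L sL R'L LM.
    have LU : L `<=` U by move=> l /LM /MU.
    have sLk : subgK (f @` L) := img_subg sL LU.
    have RLk : R `<=` f @` L.
      move=> r Rr; have [m Mm fm] := RMk r Rr; exists m => //; apply: R'L; split => //=; by rewrite fm.
    have LkMk : f @` L `<=` Mk by move=> _ [l Ll <-]; exists l => //; exact: LM.
    have [[L1 LMul LV] _] := sL.
    case: (maxR (f @` L) sLk RLk LkMk) => e.
      left; apply/seteqP; split => // l Ll; split; first exact: LM.
      by rewrite /= -e; exists l.
    right; apply/seteqP; split => // m Mm.
    have : (f @` L) (f m) by rewrite e; exists m.
    case=> l Ll flm.
    have Ml : M l by exact: LM.
    have -> : m = (l : gT G) * ((l : gT G)^-1 * m) by rewrite mulKVg.
    apply: LMul => //; apply: R'L; split.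
      by apply: MM => //; exact: MV.
    rewrite /= fM ?fV ?flm ?mulVg //; [exact: MU | apply: UV; exact: MU | exact: MU].
have := hK Mk mMk (f x).
rewrite gpowE -fX // => /(_ Fk) [m Mm fm].
exact: (f_eq mM Mm Ux fm).
Qed.
End Cover.

Theorem mainTheorem20 (p : nat) (G : proPGroup p) :
  prime p ->
  (forall U : set G, pOpenSubgroup U ->
     exists (K : proPGroup p) (phi : G -> K),
       frattini_cover U phi /\
       (forall M : set K, pMaximal [set: K] M -> pHierarchical M (pFrattini M))) ->
  strongly_frattini_resistant G.
Proof.
move=> pp hyp H [aH cH] x Fx.
have Fx' : frattini (@pg_mul p G) (@pg_one p G) (@pg_inv p G) H ((x : gT G) ^+ p)%g.
  by rewrite -gpowE.
apply: contrapT => nHx.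
have [N [aN oN nN _ sepN]] := @separate p G H x setT cH nHx openT I.
have [n [s [hs hcov hirr]]] := @pg_ppower p G N (conj (conj (conj aN (abs_open_closed aN oN)) oN) nN).
have [U [M [aU oU aM oM [HM MU Ux nMx maxM]]]] := quot_main aN oN nN hcov hirr aH sepN.
have cU := abs_open_closed aU oU.
have cM := abs_open_closed aM oM.
have mM : maximal_subgroup (@pg_mul p G) (@pg_one p G) (@pg_inv p G) U M.
  split => //; by move=> e; apply: nMx; rewrite e.
have FM := frat_mono pp (conj aH cH) aM oM HM Fx'.
have [K [f [fc hK]]] := hyp U (conj (conj aU cU) oU).
apply: nMx; exact: (cover_part aU cU mM fc hK Ux FM).
Qed.
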